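(* If $B,C\in \mathcal{B}_{A}(\mathcal{H})$, then \begin{align*} d\omega _{A_{0}}^{4}\left( \begin{bmatrix} 0 & B \\ C & 0 \end{bmatrix} \right) &\leq \max \left\{ \omega _{A}\left( \left( C^{\sharp _{A}}C\right) ^{2}+\left( C^{\sharp _{A}}C\right) ^{4}\right) ,\omega _{A}\left( \left( B^{\sharp _{A}}B\right) ^{2}+\left( B^{\sharp _{A}}B\right) ^{4}\right) \right\} \\ &\quad+2\omega _{A_{0}}^{2}\left( \begin{bmatrix} 0 & C^{\sharp _{A}}CB \\ B^{\sharp _{A}}BC & 0 \end{bmatrix} \right). \end{align*}
   Context: $\mathcal{H}$ is a complex Hilbert space and $A\in\mathcal{B}(\mathcal{H})$ is a positive operator; $\langle x,z\rangle_A=\langle Ax,z\rangle$ and $\|z\|_A=\|A^{1/2}z\|$. $\mathcal{B}_A(\mathcal{H})$ denotes the set of bounded operators $S$ on $\mathcal{H}$ admitting an $A$-adjoint; $S^{\sharp_A}=A^{\dagger}S^*A$ is the distinguished $A$-adjoint ($A^\dagger$ the Moore-Penrose inverse). $\omega_A(S)=\sup\{|\langle Sz,z\rangle_A|:\|z\|_A=1\}$ is the $A$-numerical radius. $A_0=\begin{bmatrix} A&0\\0&A\end{bmatrix}$ on $\mathcal{H}\oplus\mathcal{H}$ induces $\langle x,z\rangle_{A_0}=\langle x_1,z_1\rangle_A+\langle x_2,z_2\rangle_A$; $\omega_{A_0}$ is the $A_0$-numerical radius and $d\omega_{A_0}(X)=\sup\{(|\langle Xz,z\rangle_{A_0}|^2+\|Xz\|_{A_0}^4)^{1/2}:\|z\|_{A_0}=1\}$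 is the $A_0$-Davis-Wielandt radius. *)

(* Defs.v *)
From HB Require Import structures.
From mathcomp Require Import all_boot all_order all_algebra.
From mathcomp Require Import complex.
From mathcomp Require Import boolp classical_sets reals.
From Stdlib Require Import ClassicalEpsilon.

Set Implicit Arguments.
Unset Strict Implicit.
Unset Printing Implicit Defensive.

Import Order.TTheory GRing.Theory Num.Theory.
Local Open Scope ring_scope.
Local Open Scope classical_set_scope.

Section HilbertDefs.
Variable R : realType.
Variable V : lmodType R[i].
(* the inner product <.,.> of H, linear in the first argument *)
Variable ip : V -> V -> R[i].

Definition cabs (c : R[i]) : R := Num.sqrt (complex.Re c ^+ 2 + complex.Im c ^+ 2).

Definition hnorm (x : V) : R := Num.sqrt (complex.Re (ip x x)).

Definition hilbert : Prop :=
  [/\ (forall (a : R[i]) (x y z : V), ip (a *: x + y) z = a * ip x z + ip y z),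
      (forall x y : V, ip y x = conjc (ip x y)),
      (forall x : V, complex.Im (ip x x) = 0 /\ 0 <= complex.Re (ip x x)),
      (forall x : V, ip x x = 0 -> x = 0) &
      (forall u : nat -> V,
         (forall e : R, 0 < e -> exists N : nat, forall m n : nat,
            (N <= m)%N -> (N <= n)%N -> hnorm (u m - u n) < e) ->
         exists l : V, forall e : R, 0 < e -> exists N : nat, forall n : nat,
            (N <= n)%N -> hnorm (u n - l) < e)].

Definition bounded_op (T : V -> V) : Prop :=
  (forall (a : R[i]) (x y : V), T (a *: x + y) = a *: T x + T y) /\
  exists M : R, forall x : V, hnorm (T x) <= M * hnorm x.

Definition positive_op (A : V -> V) : Prop :=
  bounded_op A /\ forall x : V, complex.Im (ip (A x) x) = 0 /\ 0 <= complex.Re (ip (A x) x).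

Definition ipA (A : V -> V) (x z : V) : R[i] := ip (A x) z.
Definition normA (A : V -> V) (z : V) : R := Num.sqrt (complex.Re (ipA A z z)).

Definition BA (A S : V -> V) : Prop :=
  bounded_op S /\
  exists T : V -> V, bounded_op T /\ forall x y : V, ipA A (S x) y = ipA A x (T y).

(* S^{#_A} = A^dagger S^* A.  For z, S^*(Az) is the vector w with
   <w,y> = <Az, Sy> for all y, and A^dagger w (for w in R(A)) is the unique
   v in N(A)^perp with A v = w.  Hence S^{#_A} z is the unique v with
   <Av,y> = <Az,Sy> for all y and v orthogonal to N(A). *)
Definition sharpA (A S : V -> V) : V -> V := fun z =>
  epsilon (inhabits (0 : V))
    (fun v => (forall y : V, ip (A v) y = ip (A z) (S y)) /\
              (forall w : V, A w = 0 -> ip v w = 0)).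

Definition omegaA (A S : V -> V) : R :=
  sup [set r : R | exists z : V, normA A z = 1 /\ r = cabs (ipA A (S z) z)].

Definition opmx (P Q S T : V -> V) : V * V -> V * V :=
  fun x => (P x.1 + Q x.2, S x.1 + T x.2).

Definition zero_op : V -> V := fun _ => 0.

Definition ipA0 (A : V -> V) (x z : V * V) : R[i] :=
  ipA A x.1 z.1 + ipA A x.2 z.2.
Definition normA0 (A : V -> V) (z : V * V) : R := Num.sqrt (complex.Re (ipA0 A z z)).

Definition omegaA0 (A : V -> V) (X : V * V -> V * V) : R :=
  sup [set r : R | exists z : V * V, normA0 A z = 1 /\ r = cabs (ipA0 A (X z) z)].

Definition dwA0 (A : V -> V) (X : V * V -> V * V) : R :=
  sup [set r : R | exists z : V * V, normA0 A z = 1 /\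
        r = Num.sqrt (cabs (ipA0 A (X z) z) ^+ 2 + normA0 A (X z) ^+ 4)].

Definition sq_plus_4th (T : V -> V) : V -> V := fun z => T (T z) + iter 4 T z.

End HilbertDefs.

(* Main.v *)
Require Import Defs.
From HB Require Import structures.
From mathcomp Require Import all_boot all_order all_algebra.
From mathcomp Require Import complex.
From mathcomp Require Import boolp classical_sets reals.
From mathcomp Require Import ring lra.
From Stdlib Require ClassicalEpsilon.
Set Implicit Arguments.
Unset Strict Implicit.
Unset Printing Implicit Defensive.
Import Order.TTheory GRing.Theory Num.Theory.
Local Open Scope ring_scope.
Local Open Scope complex_scope.
Section Cplx.
Variable R : realType.
Definition csq (c : R[i]) : R := complex.Re c ^+ 2 + complex.Im c ^+ 2.
Lemma csq_ge0 (c : R[i]) : 0 <= csq c.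
Proof. by rewrite /csq addr_ge0 // sqr_ge0. Qed.
Lemma cabs_sq (c : R[i]) : cabs c ^+ 2 = csq c.
Proof. by rewrite /cabs sqr_sqrtr // csq_ge0. Qed.
Lemma cabs_ge0 (c : R[i]) : 0 <= cabs c.
Proof. exact: sqrtr_ge0. Qed.
Lemma csqM (c d : R[i]) : csq (c * d) = csq c * csq d.
Proof. by case: c => a b; case: d => a' b'; rewrite /csq; simpc; rewrite /=; ring. Qed.
Lemma csqJ (c : R[i]) : csq (conjc c) = csq c.
Proof. by case: c => a b; rewrite /csq /=; ring. Qed.
Lemma csqR (r : R) : csq r%:C = r ^+ 2.
Proof. by rewrite /csq /= expr0n /= addr0. Qed.
Lemma Re_sq_le (c : R[i]) : complex.Re c ^+ 2 <= csq c.
Proof. by rewrite /csq lerDl sqr_ge0. Qed.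
Lemma cabsR (r : R) : 0 <= r -> cabs r%:C = r.
Proof. by move=> r0; rewrite /cabs -/(csq _) csqR sqrtr_sqr ger0_norm. Qed.
Lemma conjcD (x y : R[i]) : conjc (x + y) = conjc x + conjc y.
Proof. by case: x => a b; case: y => c d; apply/eqP; rewrite eq_complex /= opprD !eqxx. Qed.
Lemma conjcM (x y : R[i]) : conjc (x * y) = conjc x * conjc y.
Proof. by case: x => a b; case: y => c d; simpc; apply/eqP; rewrite eq_complex /=; apply/andP; split; apply/eqP; ring. Qed.
Lemma conjcN (x : R[i]) : conjc (- x) = - conjc x.
Proof. by case: x. Qed.
Lemma conjcKK (x : R[i]) : conjc (conjc x) = x.
Proof. by case: x => a b /=; rewrite opprK. Qed.
End Cplx.

Section Form.
Variables (R : realType) (W : lmodType R[i]) (f : W -> W -> R[i]).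
Hypothesis flin : forall a x y z, f (a *: x + y) z = a * f x z + f y z.
Hypothesis fherm : forall x y, f y x = conjc (f x y).
Hypothesis fpos : forall x, complex.Im (f x x) = 0 /\ 0 <= complex.Re (f x x).

Lemma f0l z : f 0 z = 0.
Proof.
have := flin 1 0 0 z; rewrite scale1r !addr0 mul1r => h.
by apply/eqP; rewrite -(addrI (f 0 z) (_ : _ + 0 = _ + f 0 z)) ?addr0.
Qed.
Lemma fDl x y z : f (x + y) z = f x z + f y z.
Proof. by have := flin 1 x y z; rewrite scale1r mul1r. Qed.
Lemma fZl a x z : f (a *: x) z = a * f x z.
Proof. by have := flin a x 0 z; rewrite addr0 f0l addr0. Qed.
Lemma fNl x z : f (- x) z = - f x z.
Proof. by rewrite -scaleN1r fZl mulN1r. Qed.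
Lemma fBl x y z : f (x - y) z = f x z - f y z.
Proof. by rewrite fDl fNl. Qed.
Lemma f0r z : f z 0 = 0.
Proof. by rewrite fherm f0l rmorph0. Qed.
Lemma fDr z x y : f z (x + y) = f z x + f z y.
Proof. by rewrite fherm fDl rmorphD (fherm x z) (fherm y z). Qed.
Lemma fZr z a x : f z (a *: x) = conjc a * f z x.
Proof. by rewrite fherm fZl rmorphM (fherm x z). Qed.
Lemma fNr z x : f z (- x) = - f z x.
Proof. by rewrite fherm fNl rmorphN (fherm x z). Qed.
Lemma fBr z x y : f z (x - y) = f z x - f z y.
Proof. by rewrite fDr fNr. Qed.

Definition Nf x := complex.Re (f x x).
Lemma Nf_ge0 x : 0 <= Nf x.
Proof. by case: (fpos x). Qed.
Lemma fxxE x : f x x = (Nf x)%:C.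
Proof.
rewrite /Nf; case: (fpos x); case: (f x x) => a b /= -> _.
by rewrite complexr0.
Qed.

Lemma quad_lemma (a b k : R) : 0 <= a -> 0 <= b -> 0 <= k ->
  (forall t, 0 <= a - 2 * t * k + t ^+ 2 * k * b) -> k <= a * b.
Proof.
move=> a0 b0 k0 H.
have [->|kn0] := eqVneq k 0; first by rewrite mulr_ge0.
have [bz|bn0] := eqVneq b 0.
  have := H ((a + 1) / (2 * k)); rewrite bz mulr0 addr0.
  have -> : 2 * ((a + 1) / (2 * k)) * k = a + 1 by field; rewrite kn0.
  lra.
have := H (b^-1).
have -> : 2 * b^-1 * k = 2 * (k / b) by field.
have -> : b^-1 ^+ 2 * k * b = k / b by field.
have bp : 0 < b by rewrite lt_def bn0 b0.
rewrite -(ler_pM2r bp) mul0r.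
have -> : (a - 2 * (k / b) + k / b) * b = a * b - k by field.
lra.
Qed.

Lemma CS x y : csq (f x y) <= Nf x * Nf y.
Proof.
apply: quad_lemma; rewrite ?Nf_ge0 ?csq_ge0 // => t.
have := Nf_ge0 (x - ((t%:C) * f x y) *: y).
rewrite /Nf fBl !fBr !fZl !fZr (fherm x y) -/(Nf _).
rewrite fxxE (fxxE y).
move: (Nf x) (Nf y) => a b.
case: (f x y) => c1 c2; rewrite /csq; simpc; rewrite /=.
move=> h; nra.
Qed.
Lemma real_key (A B R2 p q X : R) : 0 <= A -> 0 <= B -> 0 <= R2 ->
  X ^+ 2 <= A * B * R2 -> (A + B) ^+ 2 <= A * p + B * q + 2 * X ->
  (A + B) ^+ 2 <= p ^+ 2 + q ^+ 2 + 2 * R2.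
Proof.
move=> A0 B0 R0 HX HS.
set m := Num.sqrt (A * B); set r := Num.sqrt R2.
have m0 : 0 <= m by apply: sqrtr_ge0.
have r0 : 0 <= r by apply: sqrtr_ge0.
have mE : m ^+ 2 = A * B by rewrite sqr_sqrtr // mulr_ge0.
have rE : r ^+ 2 = R2 by rewrite sqr_sqrtr.
have Xle : X <= m * r.
  have : X ^+ 2 <= (m * r) ^+ 2 by rewrite exprMn mE rE.
  move=> h; have [Xn|Xp] := lerP X 0; first by apply: le_trans Xn (mulr_ge0 m0 r0).
  by rewrite -(ler_pXn2r (_ : 0 < 2)%N) // ?nnegrE ?(ltW Xp) ?mulr_ge0.
set S := A + B; set T := p ^+ 2 + q ^+ 2 + 2 * R2.
have L0 : 0 <= A * p + B * q + 2 * X by apply: le_trans HS; apply: sqr_ge0.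
have CS3 : (A * p + B * q + 2 * (m * r)) ^+ 2 <= S ^+ 2 * T.
  have -> : S ^+ 2 = A ^+ 2 + B ^+ 2 + 2 * m ^+ 2 by rewrite mE /S; ring.
  rewrite /T -rE.
  have e : (A ^+ 2 + B ^+ 2 + 2 * m ^+ 2) * (p ^+ 2 + q ^+ 2 + 2 * r ^+ 2) -
    (A * p + B * q + 2 * (m * r)) ^+ 2 =
    (A * q - B * p) ^+ 2 + 2 * (A * r - m * p) ^+ 2 + 2 * (B * r - m * q) ^+ 2.
    ring.
  rewrite -subr_ge0 e.
  have := sqr_ge0 (A * q - B * p); have := sqr_ge0 (A * r - m * p); have := sqr_ge0 (B * r - m * q); lra.
have L2 : (A * p + B * q + 2 * X) ^+ 2 <= S ^+ 2 * T.
  apply: le_trans CS3; rewrite ler_sqr ?nnegrE //; last first.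
    have := mulr_ge0 A0 (ltW (lt_le_trans ltr01 (lexx 1))). 
    have := mulr_ge0 m0 r0; nra.
  lra.
have S0 : 0 <= S by rewrite addr_ge0.
have [Sz|Sp] := eqVneq S 0.
  rewrite Sz expr0n /= /T.
  have := sqr_ge0 p; have := sqr_ge0 q; lra.
have S2p : 0 < S ^+ 2 by rewrite exprn_gt0 // lt_def Sp S0.
have h4 : S ^+ 2 * S ^+ 2 <= S ^+ 2 * T.
  apply: le_trans L2; rewrite -expr2 ler_sqr ?nnegrE //; apply: sqr_ge0.
by rewrite -(ler_pM2l S2p).
Qed.

Lemma conj_mul_self (c : R[i]) : conjc c * c = (csq c)%:C.
Proof.
case: c => a b; rewrite /csq; simpc; rewrite /=.
by apply/eqP; rewrite eq_complex /=; apply/andP; split; apply/eqP; ring.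
Qed.

Lemma Re_le_cabs_prod (c : R[i]) : complex.Re c ^+ 2 <= csq c.
Proof. exact: Re_sq_le. Qed.

Lemma perz z u v : Nf z = 1 ->
  (csq (f u z) + csq (f v z)) ^+ 2 <= Nf u ^+ 2 + Nf v ^+ 2 + 2 * csq (f u v).
Proof.
move=> Nz.
set a := f u z; set b := f v z.
set w := conjc a *: u + conjc b *: v.
have fwz : f w z = (csq a + csq b)%:C.
  by rewrite /w fDl !fZl -/a -/b !conj_mul_self -rmorphD.
have h1 := CS w z; rewrite fwz csqR Nz mulr1 in h1.
apply: (real_key (X := complex.Re (conjc a * b * f u v)) _ _ (csq_ge0 _)).
- exact: csq_ge0.
- exact: csq_ge0.
- by apply: le_trans (Re_sq_le _) _; rewrite !csqM csqJ.
apply: le_trans h1 _; rewrite le_eqVlt; apply/orP; left; apply/eqP.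
rewrite /Nf /w !fDl !fZl !fDr !fZr !conjcK !fxxE (fherm u v).
try clear h1; try clear fwz; clear w.
move: (Nf u) (Nf v) (f u v) a b => p q r a' b'.
case: r => r1 r2; case: a' => a1 a2; case: b' => b1 b2.
rewrite /csq; simpc; rewrite /=; ring.
Qed.
Lemma ReJ (c : R[i]) : complex.Re (conjc c) = complex.Re c.
Proof. by case: c. Qed.

Lemma NfZ a x : Nf (a *: x) = csq a * Nf x.
Proof.
rewrite /Nf fZl fZr fxxE; move: (Nf x) => n.
by case: a => a1 a2; rewrite /csq; simpc; rewrite /=; ring.
Qed.

Lemma NfD x y : Nf (x + y) = Nf x + Nf y + 2 * complex.Re (f x y).
Proof.
rewrite /Nf fDl !fDr (fherm x y) -/(Nf x) -/(Nf y) !fxxE.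
move: (Nf x) (Nf y) (f x y) => p q c; case: c => c1 c2; simpc; rewrite /=; ring.
Qed.

Lemma NfB x y : Nf (x - y) = Nf x + Nf y - 2 * complex.Re (f x y).
Proof.
rewrite /Nf fBl !fBr (fherm x y) -/(Nf x) -/(Nf y) !fxxE.
move: (Nf x) (Nf y) (f x y) => p q c; case: c => c1 c2; simpc; rewrite /=; ring.
Qed.

Lemma NfBZ x b y :
  Nf (x - b *: y) = Nf x - 2 * complex.Re (conjc b * f x y) + csq b * Nf y.
Proof.
rewrite /Nf fBl !fBr !fZl !fZr (fherm x y) -/(Nf x) -/(Nf y) !fxxE.
move: (Nf x) (Nf y) (f x y) => p q c; case: c => c1 c2; case: b => b1 b2.
rewrite /csq; simpc; rewrite /=; ring.
Qed.

Lemma Re_f_le x y t : 0 < t ->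
  2 * complex.Re (f x y) <= t * Nf x + t^-1 * Nf y.
Proof.
move=> t0.
have h := Nf_ge0 (t%:C *: x - y).
rewrite NfB NfZ fZl csqR in h.
have E : complex.Re (t%:C * f x y) = t * complex.Re (f x y).
  by case: (f x y) => c1 c2; simpc; rewrite /=; ring.
rewrite E in h.
rewrite -(ler_pM2l t0) mulrDr !mulrA mulfV ?gt_eqF // mul1r.
move: (Nf x) (Nf y) (complex.Re (f x y)) h => p q r h; nra.
Qed.

Lemma NfD_le x y t : 0 < t ->
  Nf (x + y) <= (1 + t) * Nf x + (1 + t^-1) * Nf y.
Proof.
move=> t0; rewrite NfD; have := Re_f_le x y t0; lra.
Qed.

Lemma NfD2 x y : Nf (x + y) <= 2 * Nf x + 2 * Nf y.
Proof. have := NfD_le x y ltr01; rewrite invr1; lra. Qed.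

Lemma csq_eq0 (c : R[i]) : csq c = 0 -> c = 0.
Proof.
case: c => a b; rewrite /csq /= => h.
have ha : a ^+ 2 = 0 by have := sqr_ge0 a; have := sqr_ge0 b; lra.
have hb : b ^+ 2 = 0 by have := sqr_ge0 a; have := sqr_ge0 b; lra.
by move/eqP: ha; rewrite sqrf_eq0 => /eqP ->; move/eqP: hb; rewrite sqrf_eq0 => /eqP ->.
Qed.

Lemma Nf0_f x y : Nf x = 0 -> f x y = 0.
Proof.
move=> h; apply: csq_eq0; apply/eqP; rewrite eq_le csq_ge0 andbT.
by have := CS x y; rewrite h mul0r.
Qed.

Lemma Re_le_cabs (c : R[i]) : complex.Re c <= cabs c.
Proof.
rewrite /cabs -/(csq c); apply: le_trans (ler_norm _) _.
by rewrite -sqrtr_sqr ler_sqrt ?csq_ge0 // Re_sq_le.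
Qed.

Lemma Re_f_sq x y : complex.Re (f x y) ^+ 2 <= Nf x * Nf y.
Proof. exact: le_trans (Re_sq_le _) (CS x y). Qed.

Lemma Nf_par x y : Nf (x - y) + Nf (x + y) = 2 * Nf x + 2 * Nf y.
Proof. rewrite NfB NfD; lra. Qed.
End Form.
Lemma polar (R : realType) (W : lmodType R[i]) (g : W -> W -> R[i]) :
  (forall a x y z, g (a *: x + y) z = a * g x z + g y z) ->
  (forall a x y z, g z (a *: x + y) = conjc a * g z x + g z y) ->
  (forall w, g w w = 0) -> forall x y, g x y = 0.
Proof.
move=> gl gr g0 x y.
have gD z u v : g (u + v) z = g u z + g v z by have := gl 1 u v z; rewrite scale1r mul1r.
have rD z u v : g z (u + v) = g z u + g z v by have := gr 1 u v z; rewrite scale1r rmorph1 mul1r.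
have gZ z a u : g (a *: u) z = a * g u z.
  have := gl a u 0 z; rewrite addr0 => ->.
  have := gl 1 0 0 z; rewrite scale1r addr0 mul1r => h.
  have -> : g 0 z = 0 by apply/eqP; rewrite -(addrI (g 0 z) (_ : _ + 0 = _ + g 0 z)) ?addr0.
  by rewrite addr0.
have rZ z a u : g z (a *: u) = conjc a * g z u.
  have := gr a u 0 z; rewrite addr0 => ->.
  have := gr 1 0 0 z; rewrite scale1r addr0 rmorph1 mul1r => h.
  have -> : g z 0 = 0 by apply/eqP; rewrite -(addrI (g z 0) (_ : _ + 0 = _ + g z 0)) ?addr0.
  by rewrite addr0.
have e1 := g0 (x + y); rewrite gD !rD !g0 add0r addr0 in e1.
have e2 := g0 (x + 'i *: y); rewrite gD !rD !gZ !rZ !g0 in e2.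
move: e1 e2; case: (g x y) => a b; case: (g y x) => c d.
rewrite /=; simpc => e1 e2.
move: e1 e2; rewrite /= => /eqP; rewrite eq_complex /= => /andP [/eqP h1 /eqP h2].
move/eqP; rewrite eq_complex /= => /andP [/eqP h3 /eqP h4].
apply/eqP; rewrite eq_complex /=; apply/andP; split; apply/eqP; lra.
Qed.

Section Main.
Variables (R : realType) (V : lmodType R[i]) (ip : V -> V -> R[i]) (A : V -> V).
Hypothesis ipl : forall a x y z, ip (a *: x + y) z = a * ip x z + ip y z.
Hypothesis iph : forall x y, ip y x = conjc (ip x y).
Hypothesis ipp : forall x, complex.Im (ip x x) = 0 /\ 0 <= complex.Re (ip x x).
Hypothesis ipd : forall x, ip x x = 0 -> x = 0.
Hypothesis ipc : forall u : nat -> V,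
         (forall e : R, 0 < e -> exists N : nat, forall m n : nat,
            (N <= m)%N -> (N <= n)%N -> hnorm ip (u m - u n) < e) ->
         exists l : V, forall e : R, 0 < e -> exists N : nat, forall n : nat,
            (N <= n)%N -> hnorm ip (u n - l) < e.
Hypothesis Alin : forall (a : R[i]) (x y : V), A (a *: x + y) = a *: A x + A y.
Hypothesis AM : exists M : R, forall x : V, hnorm ip (A x) <= M * hnorm ip x.
Hypothesis Apos : forall x : V, complex.Im (ip (A x) x) = 0 /\ 0 <= complex.Re (ip (A x) x).

Local Notation h := (Nf ip).

Lemma lin0 (T : V -> V) : (forall (a : R[i]) x y, T (a *: x + y) = a *: T x + T y) -> T 0 = 0.
Proof.
move=> Tl; have := Tl 1 0 0; rewrite !scale1r !addr0 => h0.
by apply/eqP; rewrite -(addrI (T 0) (_ : _ + 0 = _ + T 0)) ?addr0.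
Qed.
Lemma linD (T : V -> V) : (forall (a : R[i]) x y, T (a *: x + y) = a *: T x + T y) ->
  forall x y, T (x + y) = T x + T y.
Proof. by move=> Tl x y; have := Tl 1 x y; rewrite !scale1r. Qed.
Lemma linZ (T : V -> V) : (forall (a : R[i]) x y, T (a *: x + y) = a *: T x + T y) ->
  forall a x, T (a *: x) = a *: T x.
Proof. by move=> Tl a x; have := Tl a x 0; rewrite !addr0 lin0 // addr0. Qed.
Lemma linN (T : V -> V) : (forall (a : R[i]) x y, T (a *: x + y) = a *: T x + T y) ->
  forall x, T (- x) = - T x.
Proof. by move=> Tl x; rewrite -scaleN1r linZ // scaleN1r. Qed.
Lemma linB (T : V -> V) : (forall (a : R[i]) x y, T (a *: x + y) = a *: T x + T y) ->
  forall x y, T (x - y) = T x - T y.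
Proof. by move=> Tl x y; rewrite linD // linN. Qed.

Lemma sq_bound (T : V -> V) M : (forall x, hnorm ip (T x) <= M * hnorm ip x) ->
  forall x, h (T x) <= M ^+ 2 * h x.
Proof.
move=> H x; have := H x.
have e1 : h (T x) = hnorm ip (T x) ^+ 2 by rewrite sqr_sqrtr // Nf_ge0.
have e2 : h x = hnorm ip x ^+ 2 by rewrite sqr_sqrtr // Nf_ge0.
rewrite e1 e2; have := sqrtr_ge0 (h (T x)); have := sqrtr_ge0 (h x).
rewrite /hnorm; move: (Num.sqrt _) (Num.sqrt _) => a b a0 b0 hb; nra.
Qed.

Lemma Aherm x y : ip (A y) x = conjc (ip (A x) y).
Proof.
pose g x y := ip (A x) y - conjc (ip (A y) x).
suff : g y x = 0.
  by rewrite /g => /eqP; rewrite subr_eq0 => /eqP ->.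
apply: polar.
- move=> a u v z; rewrite /g Alin ipl !(fDr ipl iph) !(fZr ipl iph) conjcD conjcM conjcKK.
  by ring.
- move=> a u v z; rewrite /g Alin ipl !(fDr ipl iph) !(fZr ipl iph) conjcD conjcM.
  by ring.
- move=> w; rewrite /g; case: (Apos w); case: (ip (A w) w) => c1 c2 /= -> _.
  by apply/eqP; rewrite eq_complex /= oppr0 !subrr eqxx.
Qed.

Local Notation af := (ipA ip A).

Lemma aflin a x y z : af (a *: x + y) z = a * af x z + af y z.
Proof. by rewrite /ipA Alin ipl. Qed.
Lemma afherm x y : af y x = conjc (af x y).
Proof. by rewrite /ipA Aherm. Qed.
Lemma afpos x : complex.Im (af x x) = 0 /\ 0 <= complex.Re (af x x).
Proof. exact: Apos. Qed.

Local Notation a0 := (ipA0 ip A).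

Lemma a0lin a (x y z : V * V) : a0 (a *: x + y) z = a * a0 x z + a0 y z.
Proof. by rewrite /ipA0 /= !aflin; ring. Qed.
Lemma a0herm (x y : V * V) : a0 y x = conjc (a0 x y).
Proof. by rewrite /ipA0 conjcD -!afherm. Qed.
Lemma a0pos (x : V * V) : complex.Im (a0 x x) = 0 /\ 0 <= complex.Re (a0 x x).
Proof.
rewrite /ipA0; case: (afpos x.1); case: (afpos x.2).
move: (af x.1 x.1) (af x.2 x.2) => c d.
case: c => c1 c2; case: d => d1 d2 /= -> h1 -> h2; split; first by rewrite addr0.
exact: addr_ge0.
Qed.
Lemma hN x : h (- x) = h x.
Proof.
have c1 : csq (-1 : R[i]) = 1 by rewrite /csq /=; ring.
by rewrite -scaleN1r (NfZ ipl iph ipp) c1 mul1r.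
Qed.

Lemma hnorm_lt x e : 0 < e -> h x < e ^+ 2 -> hnorm ip x < e.
Proof.
move=> e0 hx; rewrite /hnorm -/(h x).
by rewrite -(ger0_norm (ltW e0)) -sqrtr_sqr ltr_sqrt // exprn_gt0.
Qed.

Lemma hnorm_lt_inv x e : 0 < e -> hnorm ip x < e -> h x < e ^+ 2.
Proof.
move=> e0; rewrite /hnorm -/(h x) => hx.
have := Nf_ge0 ipp x => h0.
rewrite -(sqr_sqrtr h0); rewrite ltr_pXn2r // ?nnegrE ?sqrtr_ge0 //; exact: ltW.
Qed.

Lemma small_inv (e : R) : 0 < e -> exists N : nat, forall n, (N <= n)%N -> n.+1%:R^-1 < e.
Proof.
move=> e0; exists (Num.truncn (e^-1)) => n hn.
have h1 := truncnS_gt (e^-1).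
have h2 : (Num.truncn e^-1).+1%:R <= n.+1%:R :> R by rewrite ler_nat ltnS.
have h3 : e^-1 < n.+1%:R by apply: lt_le_trans h1 h2.
by rewrite -(invrK e) ltf_pV2 ?posrE ?invr_gt0 ?ltr0Sn.
Qed.

Lemma inv_mono (m n : nat) : (m <= n)%N -> n.+1%:R^-1 <= m.+1%:R^-1 :> R.
Proof. by move=> hmn; rewrite lef_pV2 ?posrE ?ltr0Sn // ler_nat ltnS. Qed.

Lemma proj v0 : exists n, A n = 0 /\ forall w, A w = 0 -> ip (v0 - n) w = 0.
Proof.
set E : set R := fun r => exists n, A n = 0 /\ r = h (v0 - n).
set d := inf E.
have A0 : A 0 = 0 by apply: lin0.
have E0 : E (h (v0 - 0)) by exists 0.
have Elb : has_lbound E by exists 0 => r [n [_ ->]]; apply: Nf_ge0.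
have dle : forall n, A n = 0 -> d <= h (v0 - n).
  by move=> n An; apply: (ge_inf Elb); exists n.
have d0 : 0 <= d by apply: lb_le_inf; [exists (h (v0 - 0)) | move=> r [n [_ ->]]; apply: Nf_ge0].
have adh : forall k : nat, exists n, A n = 0 /\ h (v0 - n) < d + k.+1%:R^-1.
  move=> k; have ek : 0 < (k.+1%:R : R)^-1 by rewrite invr_gt0 ltr0Sn.
  have [e [n [An ->]] he] := inf_adherent ek (conj (ex_intro _ _ E0) Elb).
  by exists n.
have [ns Hns] := ClassicalEpsilon.choice _ adh.
have Ans : forall k, A (ns k) = 0 by move=> k; case: (Hns k).
have hns : forall k, h (v0 - ns k) < d + k.+1%:R^-1 by move=> k; case: (Hns k).
have par : forall j k, h (ns j - ns k) <= 2 * j.+1%:R^-1 + 2 * k.+1%:R^-1.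
  move=> j k.
  set p := v0 - ns k; set q := v0 - ns j.
  set m := (2%:R^-1 : R[i]) *: (ns j + ns k).
  have Am : A m = 0 by rewrite /m linZ // linD // !Ans addr0 scaler0.
  have e1 : p - q = ns j - ns k by rewrite /p /q opprB addrC addrA subrK.
  have e2 : p + q = (2%:R : R[i]) *: (v0 - m).
    rewrite /m scalerBr scalerA mulfV ?pnatr_eq0 // scale1r scaler_nat mulr2n /p /q.
    by rewrite opprD (addrC (- ns j)) addrACA.
  have hpq := Nf_par ipl iph ipp p q.
  have h2 : h (p + q) = 4 * h (v0 - m).
    have c2 : csq (2%:R : R[i]) = 4 by rewrite /csq /=; ring.
    by rewrite e2 (NfZ ipl iph ipp) c2.
  have H1 := dle _ Am; have H2 := hns j; have H3 := hns k.
  rewrite -e1; rewrite h2 in hpq; move: H1 H2 H3 hpq; rewrite -/p -/q.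
  move: (h (p - q)) (h p) (h q) (h (v0 - m)) (j.+1%:R^-1 : R) (k.+1%:R^-1 : R) => a b c e x y.
  lra.
have cau : forall e : R, 0 < e -> exists N : nat, forall m n : nat,
            (N <= m)%N -> (N <= n)%N -> hnorm ip (ns m - ns n) < e.
  move=> e e0.
  have e2 : 0 < e ^+ 2 / 4 by rewrite divr_gt0 // exprn_gt0.
  have [N HN] := small_inv e2.
  exists N => m n hm hn; apply: hnorm_lt => //.
  apply: le_lt_trans (par m n) _.
  have := HN m hm; have := HN n hn.
  move: (m.+1%:R^-1 : R) (n.+1%:R^-1 : R) (e ^+ 2) => x y E2; lra.
have [l Hl] := ipc cau.
have conv : forall dl : R, 0 < dl -> exists N, forall n, (N <= n)%N -> h (ns n - l) < dl.
  move=> dl dl0; have sd : 0 < Num.sqrt dl by rewrite sqrtr_gt0.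
  have [N HN] := Hl _ sd.
  exists N => n hn; have := hnorm_lt_inv sd (HN n hn).
  by rewrite sqr_sqrtr // ltW.
have Al : A l = 0.
  have [M HM] := AM.
  have hb := sq_bound HM.
  have key : forall dl : R, 0 < dl -> h (A l) <= M ^+ 2 * dl.
    move=> dl dl0; have [N HN] := conv dl dl0.
    have : A l = A (l - ns N) by rewrite linB // Ans subr0.
    move=> ->; apply: le_trans (hb _) _.
    rewrite -hN opprB; apply: ler_wpM2l; first exact: sqr_ge0.
    exact: ltW (HN N (leqnn N)).
  apply: ipd; rewrite (fxxE ipp) -/(h (A l)).
  suff -> : h (A l) = 0 by [].
  apply/eqP; rewrite eq_le Nf_ge0 // andbT; apply/negP => /negP; rewrite -ltNge => hp.
  have dl0 : 0 < h (A l) / (M ^+ 2 + 1) by rewrite divr_gt0 // ltr_wpDl ?sqr_ge0.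
  have := key _ dl0.
  have Mp : 0 < M ^+ 2 + 1 by rewrite ltr_wpDl ?sqr_ge0.
  have EE : M ^+ 2 * (h (A l) / (M ^+ 2 + 1)) = h (A l) - h (A l) / (M ^+ 2 + 1).
    by field; rewrite gt_eqF.
  rewrite EE; move: dl0; move: (h (A l) / (M ^+ 2 + 1)) => y; lra.
have hl : h (v0 - l) <= d.
  apply/ler_addgt0Pr => e3 e30.
  set e := e3 / 3.
  have e0 : 0 < e by rewrite divr_gt0.
  set t := e / (d + 1).
  have t0 : 0 < t by rewrite divr_gt0 // ltr_wpDl.
  have td : t * d <= e.
    have EE2 : t * d = e - t by rewrite /t; field; rewrite gt_eqF // ltr_wpDl.
    rewrite EE2; have := t0; lra.
  have p1t : 0 < 1 + t by have := t0; lra.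
  have [K1 HK1] := small_inv (divr_gt0 e0 p1t).
  have ht : 0 < e * t / (1 + t) by apply: divr_gt0 => //; apply: mulr_gt0.
  have [K2 HK2] := conv _ ht.
  set k := maxn K1 K2.
  have hk1 := HK1 k (leq_maxl _ _).
  have hk2 := HK2 k (leq_maxr _ _).
  have -> : v0 - l = (v0 - ns k) + (ns k - l) by rewrite addrA subrK.
  apply: le_trans (NfD_le ipl iph ipp _ _ t0) _.
  have hp := hns k.
  move: hk1 hk2 hp; set a := h (v0 - ns k); set b := h (ns k - l); set ik := k.+1%:R^-1.
  move=> hk1 hk2 hp.
  have f1 : (1 + t) * ik <= e.
    by move: hk1; rewrite -(ltr_pM2l p1t) mulrCA mulfV ?gt_eqF // mulr1 => /ltW.
  have f2 : (1 + t^-1) * b <= e.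
    have E4 : (1 + t^-1) * (e * t / (1 + t)) = e.
      by field; rewrite !gt_eqF.
    rewrite -[X in _ <= X]E4; apply: ler_wpM2l; last exact: ltW.
    by rewrite addr_ge0 // invr_ge0 ltW.
  have a0 : 0 <= a := Nf_ge0 ipp _.
  have ik0 : 0 <= ik by rewrite invr_ge0.
  have : (1 + t) * a <= (1 + t) * (d + ik) by rewrite ler_pM2l // ltW.
  have E3 : e3 = 3 * e by rewrite /e; field.
  rewrite E3; move: f1 f2 td; lra.
have orth : forall w, A w = 0 -> ip (v0 - l) w = 0.
  move=> w Aw; set c := ip (v0 - l) w.
  set s := (h w + 1)^-1.
  have hw0 : 0 <= h w := Nf_ge0 ipp w.
  have s0 : 0 < s by rewrite invr_gt0 ltr_wpDl.
  have shw : s * h w < 1.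
    by rewrite /s mulrC ltr_pdivrMr ?ltr_wpDl // mul1r ltrDl.
  set n := l + (s%:C * c) *: w.
  have An : A n = 0 by rewrite /n linD // linZ // Al Aw scaler0 addr0.
  have := dle _ An.
  have -> : v0 - n = (v0 - l) - (s%:C * c) *: w by rewrite /n opprD addrA.
  rewrite (NfBZ ipl iph ipp) -/c conjcM conjc_real -mulrA conj_mul_self csqM csqR.
  have -> : complex.Re (s%:C * (csq c)%:C) = s * csq c by rewrite /= mulr0 subr0.
  move=> H; apply: csq_eq0.
  have cq := csq_ge0 c.
  move: H; set C2 := csq c => H.
  have : s * C2 * (2 - s * h w) <= 0 by nra.
  move=> H2; apply/eqP; rewrite eq_le cq andbT.
  have : 0 < s * (2 - s * h w) by rewrite mulr_gt0 // subr_gt0; apply: lt_trans shw _; rewrite ltr1n.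
  nra.
by exists l; split.
Qed.
Local Notation NA := (Nf af).

Lemma NA_ge0 x : 0 <= NA x.
Proof. exact: (Nf_ge0 afpos). Qed.

Lemma sqle (x y : R) : 0 <= x -> 0 <= y -> x ^+ 2 <= y ^+ 2 -> x <= y.
Proof. by move=> x0 y0; rewrite ler_sqr ?nnegrE. Qed.

Lemma bernoulli (r : R) n : 1 <= r -> 1 + n%:R * (r - 1) <= r ^+ n.
Proof.
move=> r1; elim: n => [|n IH]; first by rewrite mul0r addr0 expr0.
rewrite exprS -natr1.
have : 0 <= n%:R :> R by apply: ler0n.
move: (n%:R : R) IH => m IH m0.
have h1 : 0 <= r * (r ^+ n - (1 + m * (r - 1))) by apply: mulr_ge0; lra.
have h2 : 0 <= m * (r - 1) ^+ 2 by apply: mulr_ge0 => //; apply: sqr_ge0.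
nra.
Qed.

Lemma NA_le_h : exists cA, 0 <= cA /\ forall w, NA w <= cA * h w.
Proof.
have [M HM] := AM; have hb := sq_bound HM.
exists `|M|; split => // w.
apply: sqle; rewrite ?NA_ge0 ?mulr_ge0 ?Nf_ge0 //.
have := Re_f_sq ipl iph ipp (A w) w; rewrite -/(NA w) => H.
apply: le_trans H _; rewrite exprMn (real_normK (num_real M)).
have := hb w; have := Nf_ge0 ipp w; have := Nf_ge0 ipp (A w).
move: (h (A w)) (h w) (M ^+ 2) => p q m2 p0 q0 H; nra.
Qed.

Lemma sa_iter (P : V -> V) : (forall x y, af (P x) y = af x (P y)) ->
  forall n x y, af (iter n P x) y = af x (iter n P y).
Proof.
move=> sa; elim=> [//|n IH] x y.
by rewrite iterS sa IH -iterSr.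
Qed.

Lemma iter_bound (P : V -> V) c : 0 < c -> (forall x, h (P x) <= c * h x) ->
  (forall x y, af (P x) y = af x (P y)) -> forall x, NA (P x) <= c * NA x.
Proof.
move=> c0 hP sa x.
have [cA [cA0 HA]] := NA_le_h.
have hit : forall n u, h (iter n P u) <= c ^+ n * h u.
  elim=> [|n IH] u; first by rewrite expr0 mul1r.
  rewrite iterS exprS -mulrA; apply: le_trans (hP _) _.
  by rewrite ler_pM2l.
have step : forall m, NA (iter m P x) ^+ 2 <= NA (iter (m + m) P x) * NA x.
  move=> m; rewrite /Nf (sa_iter sa) -iterD mulrC.
  exact: (Re_f_sq aflin afherm afpos).
have NAx0 := NA_ge0 x.
have [Nz|Np] := eqVneq (NA x) 0.
  have H := step 1%N; rewrite Nz mulr0 /= in H.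
  rewrite Nz mulr0; apply: sqle; [exact: NA_ge0 | by [] | by rewrite expr0n /=].
have Nxp : 0 < NA x by rewrite lt_def Np NAx0.
set y := NA (P x).
have y0 : 0 <= y by apply: NA_ge0.
set e := fun k => NA (iter (2 ^ k) P x).
have claim : forall k, y ^+ (2 ^ k) * NA x <= e k * NA x ^+ (2 ^ k).
  elim=> [|k IH]; first by rewrite /e expn0 !expr1.
  have H1 : (y ^+ (2 ^ k) * NA x) ^+ 2 <= (e k * NA x ^+ (2 ^ k)) ^+ 2.
    by rewrite ler_sqr ?nnegrE ?mulr_ge0 ?exprn_ge0 ?NA_ge0.
  have H2 := step (2 ^ k)%N.
  have E2 : (2 ^ k.+1 = 2 ^ k + 2 ^ k)%N by rewrite expnS mul2n addnn.
  rewrite -E2 -/(e k.+1) in H2.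
  rewrite !exprMn -!exprM -expnSr in H1.
  have H3 : y ^+ (2 ^ k.+1) * NA x ^+ 2 <= e k.+1 * NA x * NA x ^+ (2 ^ k.+1).
    apply: le_trans H1 _; apply: ler_wpM2r; first by rewrite exprn_ge0.
    by rewrite -/(e k) in H2.
  rewrite -(ler_pM2r Nxp).
  have L1 : y ^+ (2 ^ k.+1) * NA x * NA x = y ^+ (2 ^ k.+1) * NA x ^+ 2 by ring.
  have L2 : e k.+1 * NA x ^+ (2 ^ k.+1) * NA x = e k.+1 * NA x * NA x ^+ (2 ^ k.+1) by ring.
  by rewrite L1 L2.
have ebound : forall k, e k <= cA * (c ^+ (2 ^ k) * h x).
  by move=> k; apply: le_trans (HA _) _; apply: ler_wpM2l => //; apply: hit.
apply/negP => /negP; rewrite -ltNge => hy.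
set z := c * NA x.
have z0 : 0 < z by rewrite mulr_gt0.
set r := y / z.
have r1 : 1 < r by rewrite /r ltr_pdivlMr // mul1r.
set K := cA * h x / NA x.
have rk : forall k, r ^+ (2 ^ k) <= K.
  move=> k; have := claim k; have := ebound k => H1 H2.
  have H3 : y ^+ (2 ^ k) * NA x <= cA * h x * z ^+ (2 ^ k).
    apply: le_trans H2 _; rewrite /z exprMn.
    have -> : cA * h x * (c ^+ (2 ^ k) * NA x ^+ (2 ^ k)) = (cA * (c ^+ (2 ^ k) * h x)) * NA x ^+ (2 ^ k) by ring.
    by apply: ler_wpM2r; rewrite ?exprn_ge0.
  rewrite /r expr_div_n /K ler_pdivrMr ?exprn_gt0 //.
  rewrite -(ler_pM2r Nxp).
  have L : cA * h x / NA x * z ^+ (2 ^ k) * NA x = cA * h x * z ^+ (2 ^ k).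
    by field; rewrite gt_eqF.
  by rewrite L.
have rm1 : 0 < r - 1 by rewrite subr_gt0.
have [k Hk] : exists k : nat, K < k%:R * (r - 1).
  exists (Num.truncn (K / (r - 1))).+1.
  rewrite -ltr_pdivrMr //; exact: truncnS_gt.
have := rk k; have := bernoulli (2 ^ k)%N (ltW r1).
have : (k%:R : R) <= (2 ^ k)%N%:R by rewrite ler_nat; apply: ltnW; apply: ltn_expl.
move: (k%:R : R) ((2 ^ k)%N%:R : R) Hk rm1 => kk tk Hk rm1 H1 H2 H3.
nra.
Qed.
Section Sharp.
Variable S : V -> V.
Hypothesis HS : BA ip A S.

Local Notation Sh := (sharpA ip A S).

Lemma Slin a x y : S (a *: x + y) = a *: S x + S y.
Proof. by case: HS => [[Sl _] _]. Qed.

Lemma sharp_spec z : (forall y, ip (A (Sh z)) y = ip (A z) (S y)) /\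
                     (forall w, A w = 0 -> ip (Sh z) w = 0).
Proof.
pose Pz := fun v => (forall y, ip (A v) y = ip (A z) (S y)) /\
                    (forall w, A w = 0 -> ip v w = 0).
suff ex : exists v, Pz v by exact: (ClassicalEpsilon.epsilon_spec (inhabits (0 : V)) Pz ex).
case: HS => _ [T [_ HT]].
have [n [An Hn]] := proj (T z).
exists (T z - n); split; last exact: Hn.
move=> y; rewrite linB // An subr0.
have := HT y z; rewrite /ipA => H.
by rewrite (Aherm y (T z)) -H -(Aherm (S y) z).
Qed.

Lemma sharp_af z y : af (Sh z) y = af z (S y).
Proof. by case: (sharp_spec z) => H _; apply: H. Qed.

Lemma sharp_lin a x y : Sh (a *: x + y) = a *: Sh x + Sh y.
Proof.
set D := Sh (a *: x + y) - (a *: Sh x + Sh y).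
have h1 : forall y', ip (A D) y' = 0.
  move=> y'; rewrite /D (linB Alin) (linD Alin) (linZ Alin).
  rewrite (fBl ipl) (fDl ipl) (fZl ipl).
  have := sharp_af (a *: x + y) y'; have := sharp_af x y'; have := sharp_af y y'.
  rewrite /ipA => -> -> ->; rewrite Alin (fDl ipl) (fZl ipl); by rewrite subrr.
have AD : A D = 0 by apply: ipd; apply: h1.
have h2 : ip D D = 0.
  rewrite {1}/D (fBl ipl) (fDl ipl) (fZl ipl).
  have [_ e1] := sharp_spec (a *: x + y); have [_ e2] := sharp_spec x; have [_ e3] := sharp_spec y.
  by rewrite e1 // e2 // e3 // mulr0 addr0 subrr.
by apply/eqP; rewrite -subr_eq0; apply/eqP; apply: ipd.
Qed.

Definition Qop := fun x => Sh (S x).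

Lemma Q_af x y : af (Qop x) y = af (S x) (S y).
Proof. exact: sharp_af. Qed.

Lemma Q_sa x y : af (Qop x) y = af x (Qop y).
Proof. by rewrite Q_af (afherm (Qop y) x) Q_af -afherm. Qed.

Lemma Q_lin a x y : Qop (a *: x + y) = a *: Qop x + Qop y.
Proof. by rewrite /Qop Slin sharp_lin. Qed.

Lemma Q_bound : exists K, 0 < K /\ forall x, NA (Qop x) <= K * NA x.
Proof.
case: HS => [[_ [MS HMS]] [T [[_ [MT HMT]] HT]]].
pose P := fun x => T (S x).
have Paf : forall x y, af (P x) y = af (S x) (S y).
  by move=> x y; rewrite /P afherm -HT -afherm.
have Psa : forall x y, af (P x) y = af x (P y).
  by move=> x y; rewrite Paf (afherm (P y) x) Paf -afherm.
set c := MT ^+ 2 * MS ^+ 2 + 1.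
have c0 : 0 < c by rewrite /c; have := mulr_ge0 (sqr_ge0 MT) (sqr_ge0 MS); lra.
have hP : forall x, h (P x) <= c * h x.
  move=> x; apply: le_trans (sq_bound HMT _) _.
  have := sq_bound HMS x; have := Nf_ge0 ipp x; have := Nf_ge0 ipp (S x).
  have := sqr_ge0 MT; have := sqr_ge0 MS; rewrite /c.
  move: (h (S x)) (h x) (MT ^+ 2) (MS ^+ 2) => a b m1 m2 *; nra.
exists c; split => // x.
have -> : NA (Qop x) = NA (P x).
  rewrite /Nf Q_af -Paf.
  by rewrite afherm Q_af -Paf ReJ.
exact: iter_bound.
Qed.

Lemma S_bound : exists K, 0 < K /\ forall x, NA (S x) ^+ 2 <= K * NA x ^+ 2.
Proof.
have [K [K0 HK]] := Q_bound.
exists K; split => // x.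
have -> : NA (S x) = complex.Re (af (Qop x) x) by rewrite /Nf Q_af.
apply: le_trans (Re_f_sq aflin afherm afpos _ _) _.
rewrite expr2 mulrA; apply: ler_wpM2r; [exact: NA_ge0 | exact: HK].
Qed.
End Sharp.
Lemma ReD (c d : R[i]) : complex.Re (c + d) = complex.Re c + complex.Re d.
Proof. by case: c; case: d. Qed.

Lemma ReRM (r : R) (c : R[i]) : complex.Re (r%:C * c) = r * complex.Re c.
Proof. by case: c => a b; rewrite /= mul0r subr0. Qed.

Lemma sup_ge0' (E : set R) : (forall r, E r -> 0 <= r) -> 0 <= sup E.
Proof.
move=> H; case: (pselect (has_sup E)) => [[[r Er] ub]|nh]; last by rewrite sup_out.
exact: le_trans (H r Er) (ub_le_sup ub Er).
Qed.

Lemma sup_ub' (E : set R) K : (forall r, E r -> r <= K) -> forall r, E r -> r <= sup E.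
Proof. by move=> H r Er; apply: (ub_le_sup (ex_intro _ K H)). Qed.

Lemma sup_le' (E : set R) s : 0 <= s -> (forall r, E r -> r <= s) -> sup E <= s.
Proof.
move=> s0 H; case: (pselect (exists r, E r)) => [ne|ne]; first exact: ge_sup.
by rewrite sup_out // => -[[r Er] _]; apply: ne; exists r.
Qed.

Lemma sq_le_K (c K : R) : 0 <= c -> c ^+ 2 <= K -> c <= K + 1.
Proof. move=> c0 h; nra. Qed.

Lemma normA_1 z : normA ip A z = 1 -> NA z = 1.
Proof.
rewrite /normA => h1.
by rewrite -[NA z]sqr_sqrtr ?NA_ge0 // -/(NA z); rewrite /Nf /ipA in h1 *; rewrite h1 expr1n.
Qed.

Lemma omega_prop (W : V -> V) K :
  (forall a x y, W (a *: x + y) = a *: W x + W y) ->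
  (forall x, NA (W x) <= K * NA x) ->
  0 <= omegaA ip A W /\ forall x, complex.Re (af (W x) x) <= omegaA ip A W * NA x.
Proof.
move=> Wl HK.
set E : set R := fun r => exists z, normA ip A z = 1 /\ r = cabs (ipA ip A (W z) z).
have oE : omegaA ip A W = sup E by [].
have Eb : forall r, E r -> r <= K + 1.
  move=> r [z [nz ->]]; apply: sq_le_K; first exact: cabs_ge0.
  rewrite cabs_sq; apply: le_trans (CS aflin afherm afpos _ _) _.
  by rewrite (normA_1 nz) mulr1 -[K]mulr1 -(normA_1 nz); apply: HK.
split; first by rewrite oE; apply: sup_ge0' => r [z [_ ->]]; apply: cabs_ge0.
move=> x.
have [Nz|Np] := eqVneq (NA x) 0.
  rewrite Nz mulr0.
  have := Re_f_sq aflin afherm afpos (W x) x; rewrite Nz mulr0 => H.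
  by move: H; move: (complex.Re _) => q H; nra.
have Nxp : 0 < NA x by rewrite lt_def Np NA_ge0.
set s := Num.sqrt (NA x).
have s0 : 0 < s by rewrite sqrtr_gt0.
have s2 : s ^+ 2 = NA x by rewrite sqr_sqrtr // NA_ge0.
set x' := (s^-1)%:C *: x.
have Nx' : NA x' = 1.
  rewrite (NfZ aflin afherm afpos) csqR -s2 -exprMn mulVf ?gt_eqF //; exact: expr1n.
have nx' : normA ip A x' = 1 by rewrite /normA -/(NA x') Nx' sqrtr1.
have Ex' : E (cabs (ipA ip A (W x') x')) by exists x'.
have := sup_ub' Eb Ex'; rewrite -oE => H.
have L : complex.Re (af (W x') x') = s^-1 ^+ 2 * complex.Re (af (W x) x).
  rewrite /x' (linZ Wl) (fZl aflin) (fZr aflin afherm) conjc_real mulrA -rmorphM ReRM.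
  by rewrite expr2.
have H2 : complex.Re (af (W x') x') <= omegaA ip A W := le_trans (Re_le_cabs _) H.
rewrite L in H2.
rewrite -s2; rewrite -(ler_pM2l (_ : 0 < s^-1 ^+ 2)) ?exprn_gt0 ?invr_gt0 //.
apply: le_trans H2 _; rewrite mulrCA -exprMn mulVf ?gt_eqF // expr1n mulr1.
done.
Qed.

Local Notation N0 := (Nf a0).

Lemma N0E (z : V * V) : N0 z = NA z.1 + NA z.2.
Proof. by rewrite /Nf /ipA0 ReD. Qed.

Lemma normA0_1 z : normA0 ip A z = 1 -> N0 z = 1.
Proof.
rewrite /normA0 => h1.
by rewrite -[N0 z]sqr_sqrtr ?(Nf_ge0 a0pos) // -/(N0 z); rewrite /Nf in h1 *; rewrite h1 expr1n.
Qed.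

Lemma omega0_prop (Y : V * V -> V * V) K :
  (forall z, N0 z = 1 -> N0 (Y z) <= K) ->
  0 <= omegaA0 ip A Y /\ forall z, normA0 ip A z = 1 -> cabs (a0 (Y z) z) <= omegaA0 ip A Y.
Proof.
move=> HK.
set E : set R := fun r => exists z, normA0 ip A z = 1 /\ r = cabs (ipA0 ip A (Y z) z).
have oE : omegaA0 ip A Y = sup E by [].
have Eb : forall r, E r -> r <= K + 1.
  move=> r [z [nz ->]]; apply: sq_le_K; first exact: cabs_ge0.
  rewrite cabs_sq; apply: le_trans (CS a0lin a0herm a0pos _ _) _.
  by rewrite (normA0_1 nz) mulr1; apply: HK; apply: normA0_1.
split; first by rewrite oE; apply: sup_ge0' => r [z [_ ->]]; apply: cabs_ge0.
move=> z nz; rewrite oE; apply: (sup_ub' Eb); by exists z.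
Qed.
Lemma Q4_lin (S : V -> V) (HS : BA ip A S) :
  forall a x y, sq_plus_4th (Qop S) (a *: x + y) = a *: sq_plus_4th (Qop S) x + sq_plus_4th (Qop S) y.
Proof.
move=> a x y; rewrite /sq_plus_4th /= !(Q_lin HS) scalerDr.
by rewrite addrACA.
Qed.

Lemma Q4_bound (S : V -> V) (HS : BA ip A S) :
  exists K, forall x, NA (sq_plus_4th (Qop S) x) <= K * NA x.
Proof.
have [K [K0 HK]] := Q_bound HS.
have HK2 : forall n x, NA (iter n (Qop S) x) <= K ^+ n * NA x.
  elim=> [|n IH] x; first by rewrite expr0 mul1r.
  rewrite iterS exprS -mulrA; apply: le_trans (HK _) _.
  by rewrite ler_pM2l.
exists (2 * K ^+ 2 + 2 * K ^+ 4) => x.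
rewrite /sq_plus_4th; apply: le_trans (NfD2 aflin afherm afpos _ _) _.
have h2 := HK2 2%N x; have h4 := HK2 4%N x; rewrite /= in h2 h4.
nra.
Qed.

Lemma main_ineq (B C : V -> V) : BA ip A B -> BA ip A C ->
  dwA0 ip A (opmx (@zero_op _ V) B C (@zero_op _ V)) ^+ 4 <=
    Num.max (omegaA ip A (sq_plus_4th (sharpA ip A C \o C)))
            (omegaA ip A (sq_plus_4th (sharpA ip A B \o B)))
  + 2 * omegaA0 ip A (opmx (@zero_op _ V) (sharpA ip A C \o C \o B)
                               (sharpA ip A B \o B \o C) (@zero_op _ V)) ^+ 2.
Proof.
move=> HB HC.
have [Kc HKc] := Q4_bound HC; have [Kb HKb] := Q4_bound HB.
have [oc0 Hoc] := omega_prop (Q4_lin HC) HKc.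
have [ob0 Hob] := omega_prop (Q4_lin HB) HKb.
set oc := omegaA ip A (sq_plus_4th (Qop C)) in oc0 Hoc.
set ob := omegaA ip A (sq_plus_4th (Qop B)) in ob0 Hob.
have -> : omegaA ip A (sq_plus_4th (sharpA ip A C \o C)) = oc by [].
have -> : omegaA ip A (sq_plus_4th (sharpA ip A B \o B)) = ob by [].
set Y := opmx (@zero_op _ V) (sharpA ip A C \o C \o B) (sharpA ip A B \o B \o C) (@zero_op _ V).
have [Qc [Qc0 HQc]] := Q_bound HC; have [Qb [Qb0 HQb]] := Q_bound HB.
have [SB [SB0 HSB]] := S_bound HB; have [SC [SC0 HSC]] := S_bound HC.
have YK : forall z, N0 z = 1 -> N0 (Y z) <= Qc * (SB + 1) + Qb * (SC + 1).
  move=> z Nz; rewrite N0E /Y /opmx /zero_op /= add0r addr0.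
  rewrite N0E in Nz.
  have nx := NA_ge0 z.1; have ny := NA_ge0 z.2.
  have bB : NA (B z.2) <= SB + 1.
    apply: sq_le_K; first exact: NA_ge0.
    apply: le_trans (HSB _) _; rewrite -[X in _ <= X]mulr1; apply: ler_wpM2l; first exact: ltW.
    have : NA z.2 <= 1 by lra.
    move: (NA z.2) ny => t t0 t1; nra.
  have bC : NA (C z.1) <= SC + 1.
    apply: sq_le_K; first exact: NA_ge0.
    apply: le_trans (HSC _) _; rewrite -[X in _ <= X]mulr1; apply: ler_wpM2l; first exact: ltW.
    have : NA z.1 <= 1 by lra.
    move: (NA z.1) nx => t t0 t1; nra.
  apply: lerD.
    apply: le_trans (HQc _) _; apply: ler_wpM2l; [exact: ltW | exact: bB].
  apply: le_trans (HQb _) _; apply: ler_wpM2l; [exact: ltW | exact: bC].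
have [o00 Ho0] := omega0_prop YK.
set o0 := omegaA0 ip A Y in o00 Ho0 *.
set RHS := Num.max oc ob + 2 * o0 ^+ 2.
have RHS0 : 0 <= RHS.
  rewrite /RHS; apply: addr_ge0; last by apply: mulr_ge0 => //; apply: sqr_ge0.
  by apply: le_trans oc0 _; rewrite le_max lexx.
set X := opmx (@zero_op _ V) B C (@zero_op _ V).
set E : set R := fun r => exists z, normA0 ip A z = 1 /\
        r = Num.sqrt (cabs (ipA0 ip A (X z) z) ^+ 2 + normA0 ip A (X z) ^+ 4).
have dwE : dwA0 ip A X = sup E by [].
set s := Num.sqrt (Num.sqrt RHS).
have s0 : 0 <= s by apply: sqrtr_ge0.
have key : forall r, E r -> r <= s.
  move=> r [z [nz ->]].
  have Nz := normA0_1 nz.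
  set x := z.1; set y := z.2.
  set u := X z.
  set v : V * V := (Qop C x, Qop B y).
  set v2 : V * V := (Qop C (Qop C x), Qop B (Qop B y)).
  have uE : u = (B y, C x) by rewrite /u /X /opmx /zero_op add0r addr0.
  have Nu : N0 u = NA (B y) + NA (C x) by rewrite N0E uE.
  have avz : a0 v z = (N0 u)%:C.
    rewrite /ipA0 /= (Q_af HC) (Q_af HB) !(fxxE afpos) Nu.
    by rewrite -rmorphD addrC.
  have Nv : N0 v = NA (Qop C x) + NA (Qop B y) by rewrite N0E.
  have av2z : a0 v2 z = (N0 v)%:C.
    rewrite /ipA0 /= (Q_sa HC) (Q_sa HB) !(fxxE afpos) Nv.
    by rewrite -rmorphD.
  have Nv2 : N0 v2 = complex.Re (af (Qop C (Qop C (Qop C (Qop C x)))) x)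
                   + complex.Re (af (Qop B (Qop B (Qop B (Qop B y)))) y).
    rewrite N0E /= /Nf; rewrite [in X in _ = X](Q_sa HC) [in X in _ = X](Q_sa HC).
    by rewrite [in X in _ = X](Q_sa HB) [in X in _ = X](Q_sa HB).
  have NvE : N0 v = complex.Re (af (Qop C (Qop C x)) x) + complex.Re (af (Qop B (Qop B y)) y).
    by rewrite Nv /Nf [in X in _ = X](Q_sa HC) [in X in _ = X](Q_sa HB).
  have auv : a0 u v = a0 (Y z) z.
    rewrite uE /Y /opmx /zero_op /= add0r addr0 /ipA0 /=.
    by rewrite (Q_sa HC) (Q_sa HB).
  have P := perz a0lin a0herm a0pos u v Nz.
  have F3 : N0 u ^+ 2 <= N0 v.
    have := CS a0lin a0herm a0pos v z; rewrite avz csqR Nz mulr1; done.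
  have F4 : N0 v ^+ 2 <= N0 v2.
    have := CS a0lin a0herm a0pos v2 z; rewrite av2z csqR Nz mulr1; done.
  have F5 : N0 v + N0 v2 <= Num.max oc ob.
    rewrite NvE Nv2.
    have := Hoc x; have := Hob y; rewrite /sq_plus_4th /= (fDl aflin) (fDl aflin) !ReD.
    move=> hb hc.
    have Nxy : NA x + NA y = 1 by rewrite -N0E.
    have hx := NA_ge0 x; have hy := NA_ge0 y.
    have mc : oc <= Num.max oc ob by rewrite le_max lexx.
    have mb : ob <= Num.max oc ob by rewrite le_max lexx orbT.
    move: hb hc mc mb Nxy hx hy.
    move: (complex.Re _) (complex.Re _) (complex.Re _) (complex.Re _) (Num.max oc ob) (NA x) (NA y).
    move=> a b c d M p q hb hc mc mb Nxy hx hy; nra.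
  have F6 : csq (a0 u v) <= o0 ^+ 2.
    rewrite auv -cabs_sq; rewrite ler_sqr ?nnegrE ?cabs_ge0 //; exact: Ho0.
  set S := csq (a0 u z) + csq (a0 v z).
  have S0 : 0 <= S by rewrite /S addr_ge0 ?csq_ge0.
  have SR : S ^+ 2 <= RHS.
    apply: le_trans P _; rewrite /RHS.
    have := csq_ge0 (a0 u v); lra.
  have -> : cabs (ipA0 ip A (X z) z) ^+ 2 + normA0 ip A (X z) ^+ 4 = S.
    rewrite cabs_sq -/u /S avz csqR /normA0 -/(N0 u).
    by rewrite (_ : 4 = 2 * 2)%N // exprM sqr_sqrtr // (Nf_ge0 a0pos).
  rewrite /s ler_sqrt ?sqrtr_ge0 //.
  by rewrite -(ger0_norm S0) -sqrtr_sqr ler_sqrt.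
have dws : dwA0 ip A X <= s by rewrite dwE; apply: sup_le'.
have dw0 : 0 <= dwA0 ip A X.
  rewrite dwE; apply: sup_ge0' => r [z [_ ->]]; exact: sqrtr_ge0.
have s4 : s ^+ 4 = RHS.
  by rewrite (_ : 4 = 2 * 2)%N // exprM !sqr_sqrtr // sqrtr_ge0.
rewrite -/RHS -s4.
by rewrite ler_pXn2r ?nnegrE.
Qed.
End Main.

Theorem theorem3p11 (R : realType) (V : lmodType R[i]) (ip : V -> V -> R[i])
    (A B C : V -> V) :
  hilbert ip -> positive_op ip A -> BA ip A B -> BA ip A C ->
  dwA0 ip A (opmx (@zero_op _ V) B C (@zero_op _ V)) ^+ 4 <=
    Num.max (omegaA ip A (sq_plus_4th (sharpA ip A C \o C)))
            (omegaA ip A (sq_plus_4th (sharpA ip A B \o B)))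
  + 2 * omegaA0 ip A (opmx (@zero_op _ V) (sharpA ip A C \o C \o B)
                               (sharpA ip A B \o B \o C) (@zero_op _ V)) ^+ 2.
Proof.
move=> [ipl iph ipp ipd ipc] [[Alin AM] Apos] HB HC.
by apply: main_ineq.
Qed.
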